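(* Let $\mathcal{D}_R$ be the class of all finite reflexive digraphs and let $D\in\mathcal{D}_R$. The class $\mathrm{Av}(D)=\{E\in\mathcal{D}_R: D\not\preceq E\}$, with respect to the homomorphic image ordering $\preceq$, is well quasi-ordered if and only if $D$ is isomorphic to $\overrightarrow{N}_{n,k}$ for some natural numbers $n,k$ with $2k<n$.
   Context: A digraph is a set $D$ with a binary relation $E(D)\subseteq D\times D$; reflexive means every loop $(x,x)$ is an edge. For $2k\le n$, $\overrightarrow{N}_{n,k}$ is the digraph on $\{1,\dots,n\}$ with edge set $\{(i,j):1\le i,j\le n\}\setminus\{(1,2),(3,4),\dots,(2k-1,2k)\}$. A homomorphism maps edges to edges. Homomorphic image ordering: $A\preceq B$ iff there is a surjective homomorphism $B\to A$. Well quasi-ordered means no infinite strictly decreasing sequence and no infinite antichain; digraphs considered up to isomorphism. *)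

(* Defs.v *)
From mathcomp Require Import all_boot.
Set Implicit Arguments. Unset Strict Implicit. Unset Printing Implicit Defensive.

(* A finite digraph, represented (up to isomorphism) on the vertex set
   'I_n = {0,...,n-1} with a (boolean) edge relation. *)
Record digraph := Digraph { dsize : nat; dedge : rel 'I_dsize }.

Definition vert (G : digraph) := 'I_(dsize G).

Definition reflexive_dg (G : digraph) : Prop := forall x : vert G, dedge x x.

Definition is_hom (G H : digraph) (f : vert G -> vert H) : Prop :=
  forall x y : vert G, dedge x y -> dedge (f x) (f y).

Definition himg_le (A B : digraph) : Prop :=
  exists f : vert B -> vert A, is_hom f /\ (forall a : vert A, exists b, f b = a).

Definition dg_iso (G H : digraph) : Prop :=
  exists f : vert G -> vert H, bijective f /\
    (forall x y : vert G, dedge (f x) (f y) = dedge x y).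

(* N_{n,k}: vertices 1..n (here 0..n-1), all pairs are edges except
   (1,2),(3,4),...,(2k-1,2k), i.e. (2m,2m+1) for m < k in 0-based indexing. *)
Definition N_edge (n k : nat) : rel 'I_n :=
  fun i j => ~~ [&& ~~ odd (nat_of_ord i), nat_of_ord j == (nat_of_ord i).+1 & nat_of_ord j < 2 * k].

Definition N_dg (n k : nat) : digraph := @Digraph n (@N_edge n k).

Definition wqo_on (C : digraph -> Prop) (le : digraph -> digraph -> Prop) : Prop :=
  (~ exists s : nat -> digraph,
       (forall i, C (s i)) /\ (forall i, le (s i.+1) (s i) /\ ~ le (s i) (s i.+1)))
  /\
  (~ exists s : nat -> digraph,
       (forall i, C (s i)) /\ (forall i j, i <> j -> ~ le (s i) (s j))).

Definition Av (D : digraph) (E : digraph) : Prop :=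
  reflexive_dg E /\ ~ himg_le D E.

(* Main.v *)
From Stdlib Require Import IndefiniteDescription Classical.
Require Import Defs.
From mathcomp Require Import all_boot zify.
Set Implicit Arguments. Unset Strict Implicit. Unset Printing Implicit Defensive.

Lemma chain_trans (A : Type) (R : A -> A -> Prop) (g : nat -> A) :
  (forall a, R a a) -> (forall a b c, R a b -> R b c -> R a c) ->
  (forall t, R (g t) (g t.+1)) -> forall a b, a <= b -> R (g a) (g b).
Proof.
move=> Rr Rt Hs a b; elim: b => [|b IH].
  by rewrite leqn0 => /eqP ->.
rewrite leq_eqVlt => /orP [/eqP -> //|]; rewrite ltnS => /IH Hab.
exact: Rt Hab (Hs b).
Qed.

Definition zle (a b : nat) : Prop := a <= b /\ (a == 0) = (b == 0).

Lemma zle_refl a : zle a a. Proof. by split. Qed.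
Lemma zle_trans a b c : zle a b -> zle b c -> zle a c.
Proof. move=> [h1 h2] [h3 h4]; split; [exact: leq_trans h1 h3| by rewrite h2]. Qed.

Lemma min_exists (u : nat -> nat) p :
  exists q, p < q /\ forall r, p < r -> u q <= u r.
Proof.
suff H : forall v r, p < r -> u r <= v -> exists q, p < q /\ forall r, p < r -> u q <= u r.
  by apply: (H (u p.+1) p.+1).
elim=> [|v IH] r pr urv.
  by exists r; split=> // r' _; move: urv; rewrite leqn0 => /eqP ->.
case: (classic (exists r', p < r' /\ u r' < u r)) => [[r' [pr' lt]]|N].
  apply: (IH r') => //; move: lt urv; lia.
exists r; split=> // r' pr'; rewrite leqNgt; apply/negP => lt.
by apply: N; exists r'.
Qed.

Lemma extract1 (u : nat -> nat) : exists phi : nat -> nat,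
  (forall t, phi t < phi t.+1) /\ (forall t, zle (u (phi t)) (u (phi t.+1))).
Proof.
have [g Hg] := functional_choice _ (min_exists u).
pose psi t := iter t.+1 g 0.
have Hinc : forall t, psi t < psi t.+1.
  by move=> t; rewrite /psi iterS; case: (Hg (iter t.+1 g 0)).
have Hle : forall t, u (psi t) <= u (psi t.+1).
  move=> t; rewrite /psi iterS; case: (Hg (iter t g 0)) => h1 h2.
  apply: h2; apply: ltn_trans h1 _; rewrite -iterS; exact: Hinc.
case: (classic (exists t0, 0 < u (psi t0))) => [[t0 Ht0]|N].
  exists (fun t => psi (t + t0)); split=> [t|t]; first exact: Hinc.
  have Hc := chain_trans (R := fun a b => a <= b) (g := fun t => u (psi t)) (@leqnn)
       (fun a b c => @leq_trans b a c) Hle.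
  have p1 : 0 < u (psi (t + t0)) by apply: leq_trans Ht0 (Hc _ _ _); rewrite leq_addl.
  have p2 : 0 < u (psi (t.+1 + t0)) by apply: leq_trans Ht0 (Hc _ _ _); rewrite leq_addl.
  split; first exact: Hle.
  by move: p1 p2; rewrite !lt0n => /negbTE -> /negbTE ->.
exists psi; split=> // t; split=> //.
have z : forall t, u (psi t) = 0.
  by move=> t'; apply/eqP; rewrite -leqn0 leqNgt; apply/negP => h; apply: N; exists t'.
by rewrite !z.
Qed.

Lemma dickson (C : eqType) (L : seq C) (x : nat -> C -> nat) :
  exists phi : nat -> nat, (forall t, phi t < phi t.+1) /\
    forall c, c \in L -> forall t, zle (x (phi t) c) (x (phi t.+1) c).
Proof.
elim: L => [|c L [phi [Hp HL]]].
  by exists id; split.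
have [psi [Hpsi Hc]] := extract1 (fun t => x (phi t) c).
exists (fun t => phi (psi t)); split.
  move=> t; apply: (homo_ltn (r := fun a b => a < b)) => //.
  exact: ltn_trans.
move=> c'; rewrite inE => /orP [/eqP -> //|cL] t.
apply: (chain_trans (R := zle) (g := fun t => x (phi t) c')).
- exact: zle_refl.
- exact: zle_trans.
- exact: HL.
- exact: ltnW.
Qed.

Section Pairs.
Variable T : eqType.
Definition fl (P : seq (T * T)) : seq T := flatten [seq [:: p.1; p.2] | p <- P].

Lemma fl_cons p P : fl (p :: P) = p.1 :: p.2 :: fl P.
Proof. by []. Qed.

Lemma size_fl P : size (fl P) = 2 * size P.
Proof. elim: P => [|p P IH] //; rewrite fl_cons /= IH; lia. Qed.

Lemma nth_fl0 x0 P p : p < size P -> nth x0 (fl P) (2 * p) = (nth (x0, x0) P p).1.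
Proof.
elim: P p => [|q P IH] [|p] // H; rewrite /= in H.
have -> : 2 * p.+1 = (2 * p).+2 by lia.
by rewrite fl_cons /= IH.
Qed.

Lemma nth_fl1 x0 P p : p < size P -> nth x0 (fl P) (2 * p).+1 = (nth (x0, x0) P p).2.
Proof.
elim: P p => [|q P IH] [|p] // H; rewrite /= in H.
have -> : 2 * p.+1 = (2 * p).+2 by lia.
by rewrite fl_cons /= IH.
Qed.

Lemma mem_fl x P : (x \in fl P) = has (fun p => (x == p.1) || (x == p.2)) P.
Proof. by elim: P => [|p P IH] //; rewrite fl_cons /= !inE IH orbA. Qed.

Lemma fl_uniq P : uniq P -> (forall p, p \in P -> p.1 != p.2) ->
  (forall p q x, p \in P -> q \in P -> (x == p.1) || (x == p.2) ->
     (x == q.1) || (x == q.2) -> p = q) -> uniq (fl P).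
Proof.
elim: P => [|p P IH] // /andP [pP uP] Hd Hm.
rewrite fl_cons /= IH //; last first.
- by move=> q r x qP rP; apply: Hm; rewrite inE ?qP ?rP orbT.
- by move=> q qP; apply: Hd; rewrite inE qP orbT.
have nm : forall x, (x == p.1) || (x == p.2) -> x \notin fl P.
  move=> x hx; rewrite mem_fl; apply/hasPn => q qP; apply/negP => hq.
  have := Hm p q x; rewrite !inE eqxx qP orbT /= => /(_ isT isT hx hq) e.
  by move: pP; rewrite e qP.
rewrite inE negb_or nm ?eqxx ?orbT // andbT.
rewrite nm ?eqxx ?orbT // !andbT; exact: (Hd p (mem_head _ _)).
Qed.
End Pairs.

Lemma surj_card (A B : finType) (f : B -> A) :
  (forall a, exists b, f b = a) -> #|A| <= #|B|.
Proof.
move=> Hs; have [g Hg] := functional_choice _ Hs.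
apply: (@leq_card _ _ g) => x y e; by rewrite -(Hg x) -(Hg y) e.
Qed.

Lemma hom_comp (G H K : digraph) (f : vert G -> vert H) (g : vert H -> vert K) :
  is_hom f -> is_hom g -> is_hom (g \o f).
Proof. by move=> hf hg x y e; apply: hg; apply: hf. Qed.

Lemma himg_le_trans (A B C : digraph) : himg_le A B -> himg_le B C -> himg_le A C.
Proof.
move=> [f [hf sf]] [g [hg sg]]; exists (f \o g); split; first exact: hom_comp.
move=> a; have [b <-] := sf a; have [c <-] := sg b; by exists c.
Qed.

Lemma iso_himg (A B : digraph) : dg_iso A B -> himg_le A B /\ himg_le B A.
Proof.
move=> [f [[g fg gf] he]]; split.
  exists g; split; last by move=> a; exists (f a); rewrite fg.
  by move=> x y e; rewrite -he !gf.
exists f; split; last by move=> a; exists (g a); rewrite gf.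
by move=> x y e; rewrite he.
Qed.

Lemma Av_iso (D N E : digraph) : dg_iso D N -> Av D E -> Av N E.
Proof.
move=> iDN [rE nD]; split=> // hN; apply: nD.
by apply: himg_le_trans hN; case: (iso_himg iDN).
Qed.

Definition nonedges (E : digraph) (P : seq (vert E * vert E)) :=
  forall p, p \in P -> ~~ dedge p.1 p.2.

Lemma lemmaA (E : digraph) (n k : nat) (P : seq (vert E * vert E)) :
  2 * k < n -> n <= dsize E -> uniq (fl P) -> size P = k -> nonedges P ->
  himg_le (N_dg n k) E.
Proof.
move=> kn nE uS sP nP.
case: n kn nE => [|n'] kn nE; first by lia.
set S := fl P.
have x0 : vert E by exists 0; lia.
set R := [seq v <- enum 'I_(dsize E) | v \notin S].
have uR : uniq R by rewrite filter_uniq // enum_uniq.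
have sS : size S = 2 * k by rewrite size_fl sP.
have sR : n'.+1 <= 2 * k + size R.
  have h : size (enum 'I_(dsize E)) <= size (S ++ R).
    apply: uniq_leq_size; first exact: enum_uniq.
    move=> v _; rewrite mem_cat mem_filter mem_enum andbT; by case: (v \in S).
  move: h; rewrite size_enum_ord size_cat sS => h; exact: leq_trans nE h.
pose g (v : vert E) := if v \in S then index v S else minn (2 * k + index v R) n'.
exists (fun v => inord (g v) : 'I_n'.+1); split.
  move=> u v e /=; rewrite /N_edge.
  have gl : forall w, g w <= n' by move=> w; rewrite /g; case: ifP => h;
    [move: (index_mem w S); rewrite h sS; lia | exact: geq_minr].
  rewrite !inordK ?ltnS ?gl //; apply/negP => /and3P [ev /eqP gv gk].
  have gge : forall w, w \notin S -> 2 * k <= g w.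
    move=> w /negbTE h; rewrite /g h; move: kn; lia.
  have vS : v \in S.
    by apply: contraLR gk => /gge; rewrite -leqNgt.
  have uS' : u \in S.
    by apply: contraLR gk => /gge; rewrite -leqNgt gv; lia.
  move: ev gv gk; rewrite /g vS uS' => ev gv gk.
  set p := (index u S)./2.
  have hu : index u S = 2 * p by rewrite /p -{1}(odd_double_half (index u S)) (negbTE ev); lia.
  have pk : p < size P by lia.
  have eu : u = (nth (x0, x0) P p).1 by rewrite -nth_fl0 // -/S -hu nth_index.
  have ev' : v = (nth (x0, x0) P p).2 by rewrite -nth_fl1 // -/S -hu -gv nth_index.
  by move: (nP _ (mem_nth (x0, x0) pk)); rewrite -eu -ev' e.
move=> a; have an : a < n'.+1 := ltn_ord a.
case: (ltnP a (2 * k)) => ha.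
  exists (nth x0 S a); apply: val_inj => /=.
  have aS : a < size S by rewrite sS.
  by rewrite /g mem_nth // index_uniq // inordK // ltnS; move: ha; case: a => /= a; lia.
have aR : a - 2 * k < size R by move: an sR; lia.
exists (nth x0 R (a - 2 * k)); apply: val_inj => /=.
have nS : nth x0 R (a - 2 * k) \notin S.
  by have := mem_nth x0 aR; rewrite mem_filter => /andP [].
rewrite /g (negbTE nS) index_uniq // inordK; have -> : 2 * k + (a - 2 * k) = a by lia.
  by apply/minn_idPl; rewrite -ltnS.
by rewrite ltnS geq_minr.
Qed.

Definition is_core (E : digraph) (S : seq (vert E)) :=
  forall u v : vert E, u \notin S -> v \notin S -> dedge u v.

Lemma core_exists (E : digraph) (n k : nat) : 2 * k < n ->
  Av (N_dg n k) E -> exists S : seq (vert E), [/\ uniq S, size S < n & is_core S].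
Proof.
move=> kn [rE nN].
case: (ltnP (dsize E) n) => hE.
  exists (enum 'I_(dsize E)); split; first exact: enum_uniq.
    by rewrite size_enum_ord.
  by move=> u v; rewrite mem_enum.
have matching : forall P : seq (vert E * vert E), uniq (fl P) -> nonedges P ->
    size P <= k -> exists S : seq (vert E), [/\ uniq S, size S < n & is_core S].
  move=> P0; move: {2}(k - size P0) (leqnn (k - size P0)) => d.
  elim: d P0 => [|d IH] P Hd uP nP sPk.
    by exfalso; apply: nN; apply: (lemmaA (P := P)) => //; lia.
  case: (eqVneq (size P) k) => sk.
    by exfalso; apply: nN; apply: (lemmaA (P := P)).
  case: (classic (exists u v, [/\ u \notin fl P, v \notin fl P & ~~ dedge u v])).
    move=> [u [v [uS vS e]]].
    have uv : u != v by apply: contraNneq e => ->; apply: rE.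
    apply: (IH ((u, v) :: P)).
    - move: Hd sk sPk => /=; lia.
    - by rewrite fl_cons /= inE negb_or uv uS vS uP.
    - by move=> p; rewrite inE => /orP [/eqP -> //|]; apply: nP.
    - move: sk sPk => /=; lia.
  move=> N; exists (fl P); split=> //.
    by rewrite size_fl; apply: leq_ltn_trans kn; rewrite leq_mul2l sPk orbT.
  move=> u v uS vS; apply/negPn/negP => e; apply: N; by exists u, v.
by apply: (matching [::]).
Qed.

Definition tyf (E : digraph) (B : nat) (S : seq (vert E)) (v : vert E) : {ffun 'I_B -> bool * bool} :=
  [ffun p : 'I_B => nth (false, false) [seq (dedge u v, dedge v u) | u <- S] p].
Definition adjm (E : digraph) (S : seq (vert E)) : seq (seq bool) :=
  [seq [seq dedge u w | w <- S] | u <- S].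
Definition outs (E : digraph) (B : nat) (S : seq (vert E)) (tau : {ffun 'I_B -> bool * bool}) :=
  [seq v <- enum 'I_(dsize E) | (v \notin S) && (tyf B S v == tau)].

Lemma mem_outs (E : digraph) (B : nat) (S : seq (vert E)) tau x :
  (x \in outs S tau) = (x \notin S) && (tyf B S x == tau).
Proof. by rewrite mem_filter mem_enum andbT. Qed.

Lemma tyfE (E : digraph) B (S : seq (vert E)) v x p (pB : p < B) :
  p < size S -> tyf B S v (Ordinal pB) = (dedge (nth x S p) v, dedge v (nth x S p)).
Proof. by move=> ps; rewrite /tyf ffunE /= (nth_map x). Qed.

Lemma adjmE (E : digraph) (S : seq (vert E)) x p q :
  p < size S -> q < size S ->
  nth false (nth [::] (adjm S) p) q = dedge (nth x S p) (nth x S q).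
Proof. by move=> ps qs; rewrite /adjm (nth_map x) // (nth_map x). Qed.

Lemma good_pair (E1 E2 : digraph) (B : nat) (S1 : seq (vert E1)) (S2 : seq (vert E2)) :
  reflexive_dg E1 -> is_core S1 -> uniq S1 -> uniq S2 -> size S1 = size S2 -> size S1 <= B ->
  adjm S1 = adjm S2 ->
  (forall tau : {ffun 'I_B -> bool * bool}, size (outs S1 tau) <= size (outs S2 tau) /\
      (0 < size (outs S2 tau) -> 0 < size (outs S1 tau))) ->
  himg_le E1 E2.
Proof.
move=> rE1 cS1 uS1 uS2 sS sB eA Hc.
have inh : vert E2 -> vert E1.
  move=> v0; case: (boolP (v0 \in S2)) => h.
    have : 0 < size S1 by rewrite sS; case: (S2) h.
    by case: (S1).
  have : 0 < size (outs S1 (tyf B S2 v0)).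
    by apply: (proj2 (Hc _)); case: (outs S2 (tyf B S2 v0)) (mem_outs S2 (tyf B S2 v0) v0) => //;
       rewrite h eqxx.
  by case: (outs S1 (tyf B S2 v0)).
case: (posnP (dsize E1)) => [h0|hpos].
  have e : dsize E2 = dsize E1.
    rewrite h0; apply/eqP; rewrite -leqn0 leqNgt; apply/negP => h.
    by move: (nat_of_ord (inh (Ordinal h))) (ltn_ord (inh (Ordinal h))) => m; rewrite h0.
  exists (cast_ord e); split.
    by move=> x; exfalso; move: (nat_of_ord x) (ltn_ord x) => m; rewrite e h0.
  by move=> a; exfalso; move: (nat_of_ord a) (ltn_ord a) => m; rewrite h0.
pose x1 : vert E1 := Ordinal hpos.
pose O1 (v : vert E2) := outs S1 (tyf B S2 v).
pose O2 (v : vert E2) := outs S2 (tyf B S2 v).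
pose f (v : vert E2) := if v \in S2 then nth x1 S1 (index v S2)
  else nth x1 (O1 v) (minn (index v (O2 v)) (size (O1 v)).-1).
have K1 : forall v, v \notin S2 -> f v \in O1 v.
  move=> v vS; rewrite /f (negbTE vS).
  have vO : v \in O2 v by rewrite mem_outs vS eqxx.
  have pos : 0 < size (O1 v).
    by rewrite /O1; apply: (proj2 (Hc (tyf B S2 v))); move: vO; rewrite /O2; case: (outs S2 _).
  apply: mem_nth; apply: leq_ltn_trans (geq_minr _ _) _; by case: (size (O1 v)) pos.
have K2 : forall v, v \notin S2 -> f v \notin S1 /\ tyf B S1 (f v) = tyf B S2 v.
  by move=> v /K1; rewrite mem_outs => /andP [h /eqP ->].
have K3 : forall v, v \in S2 -> f v = nth x1 S1 (index v S2).
  by move=> v h; rewrite /f h.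
exists f; split.
  move=> u v e.
  case: (boolP (u \in S2)) => uS; case: (boolP (v \in S2)) => vS.
  - rewrite !K3 //.
    have pu : index u S2 < size S1 by rewrite sS index_mem.
    have pv : index v S2 < size S1 by rewrite sS index_mem.
    rewrite -(adjmE _ pu pv) eA (adjmE u) -?sS //.
    by rewrite !nth_index.
  - have [nv tv] := K2 v vS; rewrite K3 //.
    have pu : index u S2 < size S1 by rewrite sS index_mem.
    have pB : index u S2 < B by apply: leq_trans pu sB.
    have := tyfE (f v) x1 pB pu; rewrite tv (tyfE v u) -?sS // nth_index //.
    by case=> <- _.
  - have [nu tu] := K2 u uS; rewrite (K3 v) //.
    have pv : index v S2 < size S1 by rewrite sS index_mem.
    have pB : index v S2 < B by apply: leq_trans pv sB.
    have := tyfE (f u) x1 pB pv; rewrite tu (tyfE u v) -?sS // nth_index //.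
    by case=> _ <-.
  - by apply: cS1; [case: (K2 u uS) | case: (K2 v vS)].
move=> a; case: (boolP (a \in S1)) => aS.
  have pa : index a S1 < size S2 by rewrite -sS index_mem.
  case E: S2 pa => [//|x2 S2'] pa; rewrite -E in pa.
  exists (nth x2 S2 (index a S1)).
  by rewrite K3 ?mem_nth // index_uniq // nth_index.
set tau := tyf B S1 a.
have aO : a \in outs S1 tau by rewrite mem_outs aS eqxx.
have [h1 _] := Hc tau.
set r := index a (outs S1 tau).
have r1 : r < size (outs S1 tau) by rewrite index_mem.
have r2 : r < size (outs S2 tau) by apply: leq_trans h1.
have uO : forall (E : digraph) (S : seq (vert E)) (t : {ffun 'I_B -> bool * bool}), uniq (outs S t).
  by move=> E S t; rewrite filter_uniq // enum_uniq.
case E: (outs S2 tau) r2 => [//|x2 l] r2'; rewrite -E in r2'.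
set v := nth x2 (outs S2 tau) r.
have vO : v \in outs S2 tau by apply: mem_nth.
move: (vO); rewrite mem_outs => /andP [vS /eqP tv].
exists v; rewrite /f (negbTE vS) /O1 /O2 tv index_uniq //.
have -> : minn r (size (outs S1 tau)).-1 = r.
  by apply/minn_idPl; move: r1; case: (size _).
by rewrite nth_index.
Qed.


Definition ecount (G : digraph) := #|[pred p : vert G * vert G | dedge p.1 p.2]|.
Definition mu (G : digraph) := (dsize G * dsize G + 1) * dsize G - ecount G.

Lemma ecount_le G : ecount G <= dsize G * dsize G.
Proof. by apply: leq_trans (max_card _) _; rewrite card_prod card_ord. Qed.

Lemma mu_step (A B : digraph) : himg_le A B -> ~ himg_le B A -> mu A < mu B.
Proof.
move=> [f [hf sf]] nBA.
have hAB : dsize A <= dsize B by have := surj_card sf; rewrite !card_ord.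
have eA := ecount_le A; have eB := ecount_le B.
rewrite /mu.
case: (ltnP (dsize A) (dsize B)) => hlt.
  move: (dsize A) (dsize B) (ecount A) (ecount B) hlt eA eB => a b x y ab hx hy.
  case: b ab hy => [//|c] ac hy.
  have h1 : (a * a + 1) * a <= (c * c + 1) * c.
    by rewrite ltnS in ac; apply: leq_mul => //; rewrite leq_add2r; apply: leq_mul.
  nia.
have e : dsize A = dsize B by apply/eqP; rewrite eqn_leq hAB hlt.
have [g Hg] := functional_choice _ sf.
have gi : injective g by move=> x y exy; rewrite -(Hg x) -(Hg y) exy.
have cc : #|vert B| <= #|vert A| by rewrite !card_ord e.
have [h gh hg] := inj_card_bij gi cc.
have fh : forall x, f x = h x by move=> x; rewrite -{1}(hg x) Hg.
have fi : injective f by move=> x y; rewrite !fh => /(can_inj hg).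
pose pf := fun p : vert B * vert B => (f p.1, f p.2).
have pfi : injective pf by move=> [x1 x2] [y1 y2] [/fi -> /fi ->].
have sub : pf @: [pred p : vert B * vert B | dedge p.1 p.2] \subset
           [pred p : vert A * vert A | dedge p.1 p.2].
  by apply/subsetP => q /imsetP [p pin ->]; rewrite inE /=; apply: hf.
have le1 := subset_leq_card sub; rewrite card_imset // in le1.
case: (ltnP (ecount B) (ecount A)) => hc.
  have : dsize B * dsize B <= (dsize B * dsize B + 1) * dsize B.
    by move: (dsize B) => m; nia.
  rewrite e in eA; move=> hh; rewrite e; lia.
exfalso; apply: nBA.
have eqc : #|pf @: [pred p : vert B * vert B | dedge p.1 p.2]| =
           #|[pred p : vert A * vert A | dedge p.1 p.2]|.
  by rewrite card_imset //; apply/eqP; rewrite eqn_leq le1 hc.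
have eqs := subset_cardP eqc sub.
exists g; split; last by move=> b; exists (h b); rewrite hg.
move=> a a' ea.
have : (a, a') \in [pred p : vert A * vert A | dedge p.1 p.2] by [].
rewrite -eqs => /imsetP [[p1 p2] pin [e1 e2]].
have -> : g a = p1 by rewrite e1 fh hg.
have -> : g a' = p2 by rewrite e2 fh hg.
exact: pin.
Qed.

Lemma no_desc (s : nat -> digraph) :
  ~ (forall i, himg_le (s i.+1) (s i) /\ ~ himg_le (s i) (s i.+1)).
Proof.
move=> H.
have d : forall i, mu (s i) + i <= mu (s 0).
  elim=> [|i IH]; first by rewrite addn0.
  have := mu_step (proj1 (H i)) (proj2 (H i)); lia.
by have := d (mu (s 0)).+1; lia.
Qed.

Definition N2 (j : nat) := N_dg (2 * j) j.

Lemma N_refl n k : reflexive_dg (N_dg n k).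
Proof. by move=> x; rewrite /= /N_edge (ltn_eqF (ltnSn x)) andbF. Qed.

Lemma N_edgeF n k (i j : 'I_n) : ~~ N_edge k i j -> [/\ ~~ odd i, (j : nat) = i.+1 & j < 2 * k].
Proof. by rewrite /N_edge negbK => /and3P [h1 /eqP h2 h3]. Qed.

Lemma N_edgeF' n k (i j : 'I_n) : ~~ odd i -> (j : nat) = i.+1 -> j < 2 * k -> ~~ N_edge k i j.
Proof. by move=> h1 h2 h3; rewrite /N_edge negbK h1 h2 eqxx -h2 h3. Qed.

Lemma even_half y : ~~ odd y -> y = 2 * y./2.
Proof. by move=> ev; rewrite -{1}(odd_double_half y) (negbTE ev) add0n -muln2 mulnC. Qed.

Lemma N2_incomp a b : himg_le (N2 a) (N2 b) -> a = b.
Proof.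
move=> [f [hf sf]].
have hf' : forall x y, ~~ N_edge a (f x) (f y) -> ~~ N_edge b x y.
  by move=> x y; apply: contra; apply: hf.
have fi : injective f.
  move=> x x' exx.
  have yl : (f x : nat) < 2 * a := ltn_ord (f x).
  case: (boolP (odd (f x))) => oy.
    have yl' : (f x).-1 < 2 * a by apply: leq_ltn_trans (leq_pred _) yl.
    have [z fz] := sf (Ordinal yl').
    have ne : ~~ N_edge a (f z) (f x).
      rewrite fz; apply: N_edgeF' => /=.
      - by move: oy; case: (nat_of_ord (f x)) => //= m; rewrite negbK.
      - by move: oy; case: (nat_of_ord (f x)).
      - exact: yl.
    have ne' : ~~ N_edge a (f z) (f x') by rewrite -exx.
    have [_ h1 _] := N_edgeF (hf' _ _ ne); have [_ h2 _] := N_edgeF (hf' _ _ ne').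
    by apply: ord_inj; exact: (etrans h1 (esym h2)).
  have hy := even_half oy.
  have yl' : (f x).+1 < 2 * a by lia.
  have [z fz] := sf (Ordinal yl').
  have ne : ~~ N_edge a (f x) (f z) by rewrite fz; apply: N_edgeF'.
  have ne' : ~~ N_edge a (f x') (f z) by rewrite -exx.
  have [_ h1 _] := N_edgeF (hf' _ _ ne); have [_ h2 _] := N_edgeF (hf' _ _ ne').
  by apply: val_inj; apply/eqP; rewrite -eqSS -h1 -h2.
have := leq_card f fi; have := surj_card sf; rewrite !card_ord /=; lia.
Qed.

Lemma lt2 p m : p < m -> (2 * p).+1 < 2 * m. Proof. lia. Qed.
Lemma lt2' p m : p < m -> 2 * p < 2 * m. Proof. lia. Qed.

Lemma iso_from_pairs (D : digraph) (P : seq (vert D * vert D)) :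
  uniq (fl P) -> nonedges P -> (forall a b, ~~ dedge a b -> (a, b) \in P) ->
  size (fl P) < dsize D -> dg_iso D (N_dg (dsize D) (size P)).
Proof.
move=> uS nP allP sSD.
set S := fl P.
set R := [seq v <- enum 'I_(dsize D) | v \notin S].
set L := S ++ R.
have uL : uniq L.
  rewrite cat_uniq uS filter_uniq ?enum_uniq // andbT /=.
  by apply/hasPn => v; rewrite mem_filter => /andP [].
have mL : forall v, v \in L.
  by move=> v; rewrite mem_cat mem_filter mem_enum andbT; case: (v \in S).
have sL : size L = dsize D.
  have pe : perm_eq L (enum 'I_(dsize D)).
    apply: uniq_perm => //; first exact: enum_uniq.
    by move=> v; rewrite mL mem_enum.
  by rewrite (perm_size pe) size_enum_ord.
have hidx : forall v, index v L < dsize D.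
  by move=> v; have := index_mem v L; rewrite mL sL.
pose g (v : vert D) : 'I_(dsize D) := Ordinal (hidx v).
have idxS : forall v, v \in S -> index v L = index v S.
  by move=> v vS; rewrite /L index_cat vS.
exists g; split.
  apply: injF_bij => x y /(congr1 val) /= e.
  by rewrite -(nth_index x (mL x)) e nth_index.
move=> x y /=.
case e: (dedge x y).
  apply/negbNE/negP => /N_edgeF [ev hy hk].
  rewrite /g /= in ev hy hk.
  have hxS : (index x L) < size S by rewrite size_fl; apply: ltn_trans hk; rewrite hy ltnSn.
  have xS : x \in S.
    by move: hxS; rewrite /L index_cat; case: (x \in S) => //; rewrite ltnNge leq_addr.
  have hyS : (index y L) < size S by rewrite size_fl.
  have yS : y \in S.
    by move: hyS; rewrite /L index_cat; case: (y \in S) => //; rewrite ltnNge leq_addr.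
  rewrite !idxS // in ev hy hk.
  set p := (index x S)./2.
  have hp : index x S = 2 * p by apply: even_half.
  have pk : p < size P by lia.
  have eu : x = (nth (x, x) P p).1 by rewrite -nth_fl0 // -/S -hp nth_index.
  have ev' : y = (nth (x, x) P p).2 by rewrite -nth_fl1 // -/S -hp -hy nth_index.
  by move: (nP _ (mem_nth (x, x) pk)); rewrite -eu -ev' e.
have xyP := allP _ _ (negbT e).
set p := index (x, y) P.
have pk : p < size P by rewrite index_mem.
have np : nth (x, x) P p = (x, y) by rewrite nth_index.
have ex : nth x S (2 * p) = x by rewrite nth_fl0 // np.
have ey : nth x S (2 * p).+1 = y by rewrite nth_fl1 // np.
have s1 : 2 * p < size S by rewrite size_fl; apply: lt2'.
have s2 : (2 * p).+1 < size S by rewrite size_fl; apply: lt2.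
have ix : index x S = 2 * p by rewrite -{1}ex index_uniq.
have iy : index y S = (2 * p).+1 by rewrite -{1}ey index_uniq.
have xS : x \in S by rewrite -ex mem_nth.
have yS : y \in S by rewrite -ey mem_nth.
have hxL : index x L = 2 * p by rewrite idxS.
have hyL : index y L = (2 * p).+1 by rewrite idxS.
apply/negbTE/N_edgeF' => /=.
- by rewrite hxL oddM.
- by rewrite hxL hyL.
- by rewrite hyL; apply: lt2.
Qed.

Lemma from_N2 (D : digraph) (J : nat) : reflexive_dg D -> dsize D < 2 * J ->
  himg_le D (N2 J) -> exists n k, 2 * k < n /\ dg_iso D (N_dg n k).
Proof.
move=> rD hJ [f [hf sf]].
have pre : forall a b, ~~ dedge a b -> forall x y, f x = a -> f y = b ->
    ~~ odd x /\ (y : nat) = x.+1.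
  move=> a b nab x y fx fy.
  have : ~~ N_edge J x y by apply: contra nab => h; rewrite -fx -fy; apply: hf.
  by case/N_edgeF.
pose P := enum [set p : vert D * vert D | ~~ dedge p.1 p.2].
have memP : forall p, (p \in P) = ~~ dedge p.1 p.2 by move=> p; rewrite mem_enum inE.
have nP : nonedges P by move=> p; rewrite memP.
have allP : forall a b, ~~ dedge a b -> (a, b) \in P by move=> a b; rewrite memP.
have uS : uniq (fl P).
  apply: fl_uniq; first exact: enum_uniq.
    move=> p; rewrite memP; apply: contra => /eqP e; rewrite e; exact: rD.
  move=> [a b] [c d] x; rewrite !memP /= => nab ncd hx hy.
  have [xa fa] := sf a; have [xb fb] := sf b; have [xc fc] := sf c; have [xd fd] := sf d.
  have [ea eb] := pre _ _ nab _ _ fa fb.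
  have [ec ed] := pre _ _ ncd _ _ fc fd.
  case/orP: hx => /eqP hx; case/orP: hy => /eqP hy; subst x.
  - (* a = c *)
    have [_ e2] := pre _ _ ncd _ _ (etrans fa hy) fd.
    have : xd = xb by apply: ord_inj; rewrite e2 eb.
    by move=> e; rewrite -hy -fd e fb.
  - (* a = d *)
    have [_ e2] := pre _ _ ncd _ _ fc (etrans fa hy).
    by move: ea; rewrite e2 /= ec.
  - (* b = c *)
    have [e1 _] := pre _ _ ncd _ _ (etrans fb hy) fd.
    by move: e1; rewrite eb /= ea.
  - (* b = d *)
    have [_ e2] := pre _ _ ncd _ _ fc (etrans fb hy).
    have : xc = xa by apply: ord_inj; apply/eqP; rewrite -eqSS -e2 eb.
    by move=> e; rewrite -hy -fc e fa.
have [w wS] : exists w, w \notin fl P.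
  have ninj : ~ injective f.
    move=> fi; have := leq_card f fi; rewrite !card_ord /=; lia.
  have [x [x' [exx nxx]]] : exists x x', f x = f x' /\ x <> x'.
    apply: NNPP => N; apply: ninj => x x' e; apply: NNPP => ne; apply: N.
    by exists x, x'.
  exists (f x); rewrite mem_fl; apply/hasPn => [[a b]]; rewrite memP /= => nab.
  have [xb fb] := sf b; have [xa fa] := sf a.
  apply/negP => /orP [] /eqP e.
  - have [_ e1] := pre _ _ nab _ _ e fb.
    have [_ e2] := pre _ _ nab _ _ (etrans (esym exx) e) fb.
    by apply: nxx; apply: ord_inj; apply/eqP; rewrite -eqSS -e1 e2.
  - have [_ e1] := pre _ _ nab _ _ fa e.
    have [_ e2] := pre _ _ nab _ _ fa (etrans (esym exx) e).
    by apply: nxx; apply: ord_inj; rewrite e1 e2.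
have sS : size (fl P) < dsize D.
  have : size (w :: fl P) <= size (enum 'I_(dsize D)).
    apply: uniq_leq_size; first by rewrite /= wS uS.
    by move=> v _; rewrite mem_enum.
  by rewrite size_enum_ord.
exists (dsize D), (size P); split; first by rewrite -size_fl.
exact: iso_from_pairs.
Qed.

Definition Coord (n : nat) : finType :=
  (('I_n.+1 + ('I_n * 'I_n)) + {ffun 'I_n -> bool * bool})%type.

Definition coord (n : nat) (E : digraph) (S : seq (vert E)) (c : Coord n) : nat :=
  match c with
  | inl (inl b) => (size S == b)
  | inl (inr pq) => nth false (nth [::] (adjm S) pq.1) pq.2
  | inr tau => size (outs S tau)
  end.

Lemma adjm_row (E : digraph) (S : seq (vert E)) p :
  p < size S -> size (nth [::] (adjm S) p) = size S.
Proof.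
case: S => [//|v0 l] pS; by rewrite /adjm (nth_map v0) // size_map.
Qed.

Lemma adjm_ext (E1 E2 : digraph) (S1 : seq (vert E1)) (S2 : seq (vert E2)) :
  size S1 = size S2 ->
  (forall p q, p < size S1 -> q < size S1 ->
     nth false (nth [::] (adjm S1) p) q = nth false (nth [::] (adjm S2) p) q) ->
  adjm S1 = adjm S2.
Proof.
move=> sz H; apply: (eq_from_nth (x0 := [::])); first by rewrite !size_map.
move=> p; rewrite size_map => pS.
apply: (eq_from_nth (x0 := false)); first by rewrite !adjm_row -?sz.
move=> q; rewrite adjm_row // => qS; exact: H.
Qed.

Lemma Av_N_noantichain (n k : nat) : 2 * k < n ->
  ~ exists s : nat -> digraph,
       (forall i, Av (N_dg n k) (s i)) /\ (forall i j, i <> j -> ~ himg_le (s i) (s j)).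
Proof.
move=> kn [s [Hs Ha]].
have ex : forall i, exists v : Coord n -> nat, exists S : seq (vert (s i)),
    [/\ uniq S, size S < n, is_core S & v = coord S].
  move=> i; have [S [u1 u2 u3]] := core_exists kn (Hs i).
  by exists (coord S), S.
have [x Hx] := functional_choice _ ex.
have [phi [Hphi Hz]] := dickson (enum (Coord n)) x.
pose i := phi 0; pose j := phi 1.
have Z : forall c, zle (x i c) (x j c) by move=> c; apply: Hz; rewrite mem_enum.
have [Si [ui si ci ei]] := Hx i.
have [Sj [uj sj cj ej]] := Hx j.
apply: (Ha i j); first by move=> e; have := Hphi 0; rewrite -/i -/j e ltnn.
have sz : size Si = size Sj.
  have := Z (inl (inl (@Ordinal n.+1 (size Si) (ltnW si)))); rewrite ei ej /= eqxx /=.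
  by case=> _; case: (size Sj =P size Si) => [-> //|_ /=].
apply: (good_pair (B := n) (S1 := Si) (S2 := Sj)) => //.
- by case: (Hs i).
- exact: ltnW.
- apply: adjm_ext => // p q pS qS.
  have pn : p < n by apply: leq_trans pS (ltnW si).
  have qn : q < n by apply: leq_trans qS (ltnW si).
  have := Z (inl (inr (Ordinal pn, Ordinal qn))); rewrite ei ej /=.
  by case=> _; case: (nth false _ q); case: (nth false _ q).
- move=> tau; have := Z (inr tau); rewrite ei ej /= => [[h1 h2]]; split=> //.
  by rewrite !lt0n h2.
Qed.

Theorem theorem4p6 (D : digraph) :
  reflexive_dg D ->
  (wqo_on (Av D) himg_le <->
   exists n k : nat, 2 * k < n /\ dg_iso D (N_dg n k)).
Proof.
move=> rD; split.
  move=> [_ W]; apply: NNPP => N; apply: W.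
  exists (fun i => N2 (i + dsize D).+1); split.
    move=> i; split; first exact: N_refl.
    move=> h; apply: N; apply: (from_N2 rD _ h); lia.
  move=> i j ij h; apply: ij; have := N2_incomp h; lia.
move=> [n [k [kn iso]]]; split.
  by move=> [s [_ Hs]]; apply: (no_desc Hs).
move=> [s [Hs Ha]]; apply: (Av_N_noantichain kn); exists s; split=> //.
by move=> i; apply: Av_iso iso (Hs i).
Qed.
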